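(* Let $w\in S_\infty$ with $\operatorname{len} w=m$. Then (i) $\varphi(\delta_w)\in\operatorname{span}\{\delta_u : u\in L_m(BC*S_\infty)\}$; and (ii) for each $y\in L_m(S_\infty)$ we have $\langle \varphi(\delta_y),\delta_w'\rangle\neq 0$ if and only if $y=w$.
   Context: $BC$ is the bicyclic monoid $\langle p,q : pq=e\rangle$ with involution $p^*=q$. $S_\infty$ is the free monoid on $\{t_n,t_n^*: n\in\mathbb{N}\}$ with involution $t_n\mapsto t_n^*$. $BC*S_\infty$ is the free product of monoids, with the involution $(s_1t_1\cdots s_nt_n)^*=t_n^*s_n^*\cdots t_1^*s_1^*$; $S_\infty$ is regarded as a submonoid of it. For a monoid $S$ with involution, $\mathbb{C}S$ is the semigroup algebra with basis $\{\delta_s:s\in S\}$, $\delta_s\delta_t=\delta_{st}$, $\delta_s^*=\delta_{s^*}$; for $s\in S$, $\delta_s'$ is the linear functional on $\mathbb{C}S$ with $\langle\delta_t,\delta_s'\rangle=1$ if $t=s$ and $0$ otherwise. Length: every $u\in BC*S_\infty\setminus\{e\}$ has a unique expression $u=w_1\cdots w_n$ with $n\in\mathbb{N}$, $w_i\in (BC\setminus\{e\})\cup\{t_j,t_j^*: j\in\mathbb{N}\}$, and $w_{i+1}\in\{t_j,t_j^*:j\in\mathbb{N}\}$ whenever $w_i\in BC\setminus\{e\}$; set $\operatorname{len}u=n$ and $\operatorname{len}e=0$. For $m\in\mathbb{N}_0$, $L_m(BC*S_\infty)=\{u\in BC*S_\infty:\operatorname{len}u\le m\}$ and $L_m(S_\infty)=\{u\in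 S_\infty:\operatorname{len}u\le m\}$. Fix a C*-norm $\|\cdot\|$ on $\mathbb{C}(BC*S_\infty)$ (i.e. a norm whose completion is a C*-algebra containing $\mathbb{C}(BC*S_\infty)$ as a $*$-subalgebra). Let $\gamma_n=(n\|\delta_{t_n}\|)^{-1}$ and $a_n=\delta_p+\gamma_n\delta_{t_n}$ for $n\in\mathbb{N}$, and let $\varphi:\mathbb{C}S_\infty\to\mathbb{C}(BC*S_\infty)$ be the unique unital $*$-homomorphism with $\varphi(\delta_{t_n})=a_n$ for all $n\in\mathbb{N}$. *)

(* Defs.v *)
From HB Require Import structures.
From mathcomp Require Import all_boot all_order all_algebra.
From mathcomp Require Import finmap.
From mathcomp Require Import monalg.
From mathcomp Require Import complex.
From mathcomp Require Import Rstruct.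
From Stdlib Require Rdefinitions.

Set Implicit Arguments.
Unset Strict Implicit.
Unset Printing Implicit Defensive.

Import Order.TTheory GRing.Theory Num.Theory.
Local Open Scope ring_scope.

Notation Rr := Rdefinitions.R.
Notation CC := (Rr[i]).

Record invMonoid := InvMonoid {
  im_carrier :> choiceType;
  im_one : im_carrier;
  im_mul : im_carrier -> im_carrier -> im_carrier;
  im_star : im_carrier -> im_carrier }.

Definition salg (S : invMonoid) := {malg CC[S]}.

Section SemigroupAlgebra.
Variable S : invMonoid.

Definition delta (s : S) : salg S := mkmalgU s 1.

Definition amul (f g : salg S) : salg S :=
  \sum_(s <- msupp f) \sum_(t <- msupp g) mkmalgU (im_mul s t) (mcoeff s f * mcoeff t g).

Definition astar (f : salg S) : salg S :=
  \sum_(s <- msupp f) mkmalgU (im_star s) (mcoeff s f)^*.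

Definition aone : salg S := delta (im_one S).

(* <x, delta_s'> : the coefficient of delta_s in x *)
Definition dual_delta (s : S) (x : salg S) : CC := mcoeff s x.

Definition in_span (P : S -> Prop) (x : salg S) : Prop :=
  exists l : seq (CC * S),
    (forall cu, cu \in l -> P cu.2) /\ x = \sum_(cu <- l) cu.1 *: delta cu.2.

(* C*-norm on CS (pre-C*-norm: a norm, submultiplicative, with the
   C*-identity; equivalently its completion is a C*-algebra containing
   CS as a *-subalgebra). *)
Definition is_Cstar_norm (N : salg S -> Rr) : Prop :=
  (forall x, 0 <= N x) /\
  (forall x, N x = 0 -> x = 0) /\
  (forall x y, N (x + y) <= N x + N y) /\
  (forall (c : CC) x, N (c *: x) = ComplexField.Normc.normc c * N x) /\
  (forall x y, N (amul x y) <= N x * N y) /\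
  (forall x, N (amul (astar x) x) = N x ^+ 2).

End SemigroupAlgebra.

Definition is_unital_star_hom (S1 S2 : invMonoid) (f : salg S1 -> salg S2) :=
  [/\ forall x y, f (x + y) = f x + f y,
      forall (c : CC) x, f (c *: x) = c *: f x,
      forall x y, f (amul x y) = amul (f x) (f y),
      f (aone S1) = aone S2 &
      forall x, f (astar x) = astar (f x)].

(* The bicyclic monoid BC = <p, q | pq = e>, p^* = q.                   *)
(* (a, b) represents q^a p^b (normal form).                             *)
Definition bc := (nat * nat)%type.
Definition bc_one : bc := (0, 0)%N.
Definition bc_p : bc := (0, 1)%N.
Definition bc_q : bc := (1, 0)%N.
(* q^a p^b q^c p^d = q^(a + c - min(b,c)) p^(d + b - min(b,c)) *)
Definition bc_mul (x y : bc) : bc :=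
  (addn x.1 (subn y.1 x.2), addn y.2 (subn x.2 y.1)).
Definition bc_star (x : bc) : bc := (x.2, x.1).

(* S_infty : free monoid on {t_n, t_n^* : n in N}.  The letter (k, false)
   stands for t_(k+1) and (k, true) for t_(k+1)^*  (N = {1,2,...}).    *)
Definition gen := (nat * bool)%type.
Definition gen_star (g : gen) : gen := (g.1, ~~ g.2).
Definition sinf := seq gen.
Definition sinf_star (w : sinf) : sinf := rev (map gen_star w).

Definition Sinf : invMonoid := @InvMonoid sinf [::] cat sinf_star.

Definition tgen (k : nat) : sinf := [:: (k, false)].

(* The free product BC * S_infty, as reduced words: sequences of letters
   from (BC \ {e}) u {t_j, t_j^*} with no two consecutive BC letters.  *)
Definition letter := (bc + gen)%type.
Definition isBC (l : letter) : bool := if l is inl _ then true else false.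

Fixpoint reduced (s : seq letter) : bool :=
  match s with
  | [::] => true
  | l :: s' =>
      [&& l != inl bc_one,
          (if s' is l' :: _ then ~~ (isBC l && isBC l') else true)
        & reduced s']
  end.

Definition bcs := {w : seq letter | reduced w}.
HB.instance Definition _ := Choice.on bcs.

Definition bcs_one : bcs := exist _ [::] erefl.

Definition wmul (s t : seq letter) : seq letter :=
  match rev s, t with
  | inl x :: rs, inl y :: t1 =>
      let z := bc_mul x y in
      catrev rs ((if z == bc_one then [::] else [:: inl z]) ++ t1)
  | _, _ => s ++ t
  end.

Definition letter_star (l : letter) : letter :=
  match l with inl x => inl (bc_star x) | inr g => inr (gen_star g) end.

Definition wstar (s : seq letter) : seq letter := rev (map letter_star s).

(* wmul and wstar preserve reducedness, so insubd never uses its default *)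
Definition bcs_mul (u v : bcs) : bcs := insubd bcs_one (wmul (val u) (val v)).
Definition bcs_star (u : bcs) : bcs := insubd bcs_one (wstar (val u)).

Definition BCS : invMonoid := @InvMonoid bcs bcs_one bcs_mul bcs_star.

Definition bcs_len (u : bcs) : nat := size (val u).
Definition sinf_len (w : sinf) : nat := size w.

Definition bcs_p : bcs := insubd bcs_one [:: inl bc_p].
Definition sinf_to_bcs (w : sinf) : bcs := insubd bcs_one (map inr w).

(* gamma_n = (n ||delta_(t_n)||)^-1 and a_n = delta_p + gamma_n delta_(t_n),
   for n = k+1 *)
Definition gamma (N : salg BCS -> Rr) (k : nat) : Rr :=
  ((k.+1)%:R * N (@delta BCS (sinf_to_bcs (tgen k))))^-1.

Definition a_gen (N : salg BCS -> Rr) (k : nat) : salg BCS :=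
  @delta BCS bcs_p + ((gamma N k)%:C)%C *: @delta BCS (sinf_to_bcs (tgen k)).

(* Main.v *)
Require Import Defs.
From HB Require Import structures.
From mathcomp Require Import all_boot all_order all_algebra.
From mathcomp Require Import finmap monalg complex Rstruct.
From Stdlib Require Rdefinitions.
Import Order.TTheory GRing.Theory Num.Theory.
Local Open Scope ring_scope.


Section A.
Variable S : invMonoid.
Implicit Types f g : salg S.

Lemma mkU_scale (k : S) (c x : CC) : mkmalgU k (c * x) = c *: mkmalgU k x :> salg S.
Proof. by apply/malgP=> k'; rewrite mcoeffZ !mcoeffU mulrnAr. Qed.

Lemma amulw (d1 d2 : {fset S}) f g :
  (msupp f `<=` d1)%fset -> (msupp g `<=` d2)%fset ->
  amul f g = \sum_(s <- d1) \sum_(t <- d2) mkmalgU (im_mul s t) (f@_s * g@_t).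
Proof.
move=> le_d1 le_d2; rewrite /amul (big_fset_incl _ le_d1) /=.
  apply/eq_bigr=> k1 _; apply/big_fset_incl => // k _ /mcoeff_outdom ->.
  by rewrite mulr0 monalgU0.
move=> k _ /mcoeff_outdom g1k.
by rewrite big1 => // k' _; rewrite g1k mul0r monalgU0.
Qed.

Lemma amulDl f1 f2 g : amul (f1 + f2) g = amul f1 g + amul f2 g.
Proof.
rewrite (@amulw (msupp f1 `|` msupp f2)%fset (msupp g)) ?msuppD_le //.
rewrite (@amulw (msupp f1 `|` msupp f2)%fset (msupp g)) ?fsubsetUl //.
rewrite (@amulw (msupp f1 `|` msupp f2)%fset (msupp g)) ?fsubsetUr //.
rewrite -big_split /=; apply: eq_bigr => s _; rewrite -big_split /=.
by apply: eq_bigr => t _; rewrite mcoeffD mulrDl monalgUD.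
Qed.

Lemma amulDr f g1 g2 : amul f (g1 + g2) = amul f g1 + amul f g2.
Proof.
rewrite (@amulw (msupp f) (msupp g1 `|` msupp g2)%fset) ?msuppD_le //.
rewrite (@amulw (msupp f) (msupp g1 `|` msupp g2)%fset) ?fsubsetUl //.
rewrite (@amulw (msupp f) (msupp g1 `|` msupp g2)%fset) ?fsubsetUr //.
rewrite -big_split /=; apply: eq_bigr => s _; rewrite -big_split /=.
by apply: eq_bigr => t _; rewrite mcoeffD mulrDr monalgUD.
Qed.

Lemma amulZl c f g : amul (c *: f) g = c *: amul f g.
Proof.
rewrite (@amulw (msupp f) (msupp g)) ?msuppZ_le //.
rewrite /amul scaler_sumr; apply: eq_bigr => s _; rewrite scaler_sumr.
by apply: eq_bigr => t _; rewrite mcoeffZ -mulrA mkU_scale.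
Qed.

Lemma amulZr c f g : amul f (c *: g) = c *: amul f g.
Proof.
rewrite (@amulw (msupp f) (msupp g)) ?msuppZ_le //.
rewrite /amul scaler_sumr; apply: eq_bigr => s _; rewrite scaler_sumr.
apply: eq_bigr => t _; by rewrite (mcoeffZ c g t) (mulrCA (f@_s)) (mkU_scale _ c). Qed.

Lemma amul0l g : amul 0 g = 0.
Proof. by rewrite /amul msupp0 big_seq_fset0. Qed.

Lemma msupp_delta (s : S) : msupp (delta s) = [fset s]%fset.
Proof. by rewrite /delta msuppU oner_eq0. Qed.

Lemma amul_delta (s t : S) : amul (delta s) (delta t) = delta (im_mul s t).
Proof.
by rewrite /amul !msupp_delta !big_seq_fset1 /delta !mcoeffUU mulr1.
Qed.

Lemma amul_suml (I : Type) (r : seq I) (F : I -> salg S) g :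
  amul (\sum_(i <- r) F i) g = \sum_(i <- r) amul (F i) g.
Proof.
elim: r => [|i r IH]; first by rewrite !big_nil amul0l.
by rewrite !big_cons amulDl IH.
Qed.

Lemma astarw (d : {fset S}) f : (msupp f `<=` d)%fset ->
  astar f = \sum_(s <- d) mkmalgU (im_star s) (f@_s)^*.
Proof.
move=> le; rewrite /astar (big_fset_incl _ le) //.
by move=> k _ /mcoeff_outdom ->; rewrite conjC0 monalgU0.
Qed.

Lemma astarD f g : astar (f + g) = astar f + astar g.
Proof.
rewrite (@astarw (msupp f `|` msupp g)%fset) ?msuppD_le //.
rewrite (@astarw (msupp f `|` msupp g)%fset f) ?fsubsetUl //.
rewrite (@astarw (msupp f `|` msupp g)%fset g) ?fsubsetUr //.
rewrite -big_split /=; apply: eq_bigr => s _.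
by rewrite mcoeffD rmorphD monalgUD.
Qed.

Lemma astarZ c f : astar (c *: f) = c^* *: astar f.
Proof.
rewrite (@astarw (msupp f)) ?msuppZ_le //.
rewrite /astar scaler_sumr; apply: eq_bigr => s _.
by rewrite mcoeffZ rmorphM mkU_scale.
Qed.

Lemma astar_delta (s : S) : astar (delta s) = delta (im_star s).
Proof. by rewrite /astar msupp_delta big_seq_fset1 /delta mcoeffUU conjC1. Qed.

Lemma coef_sum (l : seq (CC * S)) (z : S) :
  mcoeff z (\sum_(cu <- l) cu.1 *: delta cu.2) = \sum_(cu <- l) cu.1 * (cu.2 == z)%:R.
Proof.
rewrite raddf_sum; apply: eq_bigr => cu _.
by rewrite /= mcoeffZ /delta mcoeffU.
Qed.

End A.

Lemma reduced_map_inr (z : sinf) : reduced (map inr z).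
Proof. by elim: z => [|g [|g' z] IH] //=. Qed.

Lemma val_sinf z : val (sinf_to_bcs z) = map inr z.
Proof. by rewrite /sinf_to_bcs val_insubd reduced_map_inr. Qed.

Lemma len_sinf z : bcs_len (sinf_to_bcs z) = size z.
Proof. by rewrite /bcs_len val_sinf size_map. Qed.

Lemma reduced_rcons_inr s g : reduced s -> reduced (s ++ [:: inr g]).
Proof.
elim: s => [|l s IH] //=.
case/and3P => H1 H2 H3; apply/and3P; split => //; last exact: IH.
by case: s {IH H3} H2 => [|l' s] //=; rewrite andbF.
Qed.

Lemma wmul_inr s g : wmul s [:: inr g] = s ++ [:: inr g].
Proof. by rewrite /wmul; case: (rev s) => [|[x|x] rs]. Qed.

Lemma val_mul_inr (u : bcs) g :
  val (bcs_mul u (sinf_to_bcs [:: g])) = val u ++ [:: inr g].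
Proof.
by rewrite /bcs_mul val_insubd val_sinf /= wmul_inr reduced_rcons_inr //; exact: valP.
Qed.

Lemma eq_mul_inr (u : bcs) g z' g' :
  (bcs_mul u (sinf_to_bcs [:: g]) == sinf_to_bcs (rcons z' g')) =
  (u == sinf_to_bcs z') && (g == g').
Proof.
rewrite -val_eqE val_mul_inr !val_sinf map_rcons cats1 eqseq_rcons.
by rewrite -(val_sinf z') val_eqE.
Qed.

Lemma wmul_inl_cases s x :
  (size (wmul s [:: inl x]) <= size s)%N \/ inl x \in wmul s [:: inl x].
Proof.
rewrite /wmul; case E: (rev s) => [|[y|y] rs].
- by right; rewrite mem_cat mem_seq1 eqxx orbT.
- left; rewrite catrevE size_cat size_rev -(size_rev s) E /=.
  by case: ifP => _ /=; rewrite ?addn0 ?addn1.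
- by right; rewrite mem_cat mem_seq1 eqxx orbT.
Qed.

Lemma mul_inl (u B : bcs) x z : val B = [:: inl x] ->
  bcs_mul u B = sinf_to_bcs z -> (size z <= bcs_len u)%N.
Proof.
move=> HB E.
have V : val (bcs_mul u B) = map inr z by rewrite E val_sinf.
have : (size (val (bcs_mul u B)) <= size (val u))%N \/ inl x \in val (bcs_mul u B).
  rewrite /bcs_mul val_insubd HB; case: ifP => _; first exact: wmul_inl_cases.
  by left.
rewrite V size_map => -[] // /mapP [? _] //.
Qed.

Lemma size_wmul_inl s x : (size (wmul s [:: inl x]) <= (size s).+1)%N.
Proof.
rewrite /wmul; case E: (rev s) => [|[y|y] rs]; rewrite ?size_cat ?addn1 //.
rewrite catrevE size_cat size_rev -(size_rev s) E /=.
by case: ifP => _ /=; rewrite ?addn0 ?addn1 // leqW.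
Qed.

Lemma len_mul_inl (u B : bcs) x : val B = [:: inl x] ->
  (bcs_len (bcs_mul u B) <= (bcs_len u).+1)%N.
Proof.
move=> HB; rewrite /bcs_len /bcs_mul val_insubd HB; case: ifP => _ //.
exact: size_wmul_inl.
Qed.

Lemma len_mul_inr (u : bcs) g :
  bcs_len (bcs_mul u (sinf_to_bcs [:: g])) = (bcs_len u).+1.
Proof. by rewrite /bcs_len val_mul_inr size_cat addn1. Qed.

Lemma val_bcs_p : val bcs_p = [:: inl bc_p].
Proof. by rewrite /bcs_p val_insubd. Qed.

Lemma val_bcs_q : val (bcs_star bcs_p) = [:: inl bc_q].
Proof. by rewrite /bcs_star val_insubd val_bcs_p. Qed.

Lemma star_T k : bcs_star (sinf_to_bcs (tgen k)) = sinf_to_bcs [:: (k, true)].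
Proof. by apply: val_inj; rewrite /bcs_star val_insubd !val_sinf. Qed.

Lemma Cnz (r : Rr) : r != 0 -> ((r%:C)%C : CC) != 0.
Proof. by move=> hr; apply/eqP => /(congr1 (@complex.Re _)) /= /eqP; rewrite (negbTE hr). Qed.

Lemma sum_split2 (I : Type) (V : zmodType) (r : seq I) (F G : I -> V) :
  \sum_(i <- r) (F i + G i) = \sum_(i <- r) F i + \sum_(i <- r) G i.
Proof.
elim: r => [|a r IH]; first by rewrite !big_nil addr0.
by rewrite !big_cons IH addrACA.
Qed.

Lemma sum_cat2 (I : Type) (V : zmodType) (r1 r2 : seq I) (F : I -> V) :
  \sum_(i <- r1 ++ r2) F i = \sum_(i <- r1) F i + \sum_(i <- r2) F i.
Proof. exact: big_cat. Qed.

Section Main.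
Variables (N : salg BCS -> Rdefinitions.R) (HN : is_Cstar_norm N)
  (phi : salg Sinf -> salg BCS) (Hphi : is_unital_star_hom phi)
  (Hphi_t : forall k : nat, phi (@delta Sinf (tgen k)) = a_gen N k).

Lemma gamma_nz k : gamma N k != 0.
Proof.
rewrite /gamma invr_eq0 mulf_eq0 negb_or pnatr_eq0 /=.
apply/eqP => /(proj1 (proj2 HN)) /eqP; rewrite /delta monalgU_eq0 oner_eq0 //.
Qed.

Lemma phi_letter g : exists (B : bcs) (x : bc) (c : CC),
  [/\ val B = [:: inl x], c != 0 &
   phi (@delta Sinf [:: g]) = @delta BCS B + c *: @delta BCS (sinf_to_bcs [:: g])].
Proof.
case: Hphi => _ _ _ _ Hst.
case: g => k [].
- exists (bcs_star bcs_p), bc_q, ((gamma N k)%:C)%C^*; split.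
  + exact: val_bcs_q.
  + by rewrite conjC_eq0 Cnz // gamma_nz.
  + have -> : @delta Sinf [:: (k, true)] = astar (@delta Sinf (tgen k)).
      by rewrite astar_delta.
    rewrite Hst Hphi_t /a_gen astarD astarZ !astar_delta /=.
    by rewrite star_T.
- exists bcs_p, bc_p, ((gamma N k)%:C)%C; split.
  + exact: val_bcs_p.
  + by rewrite Cnz // gamma_nz.
  + exact: Hphi_t.
Qed.

Lemma inv (y : sinf) : exists (l : seq (CC * bcs)) (c : CC),
  [/\ c != 0,
      phi (@delta Sinf y) = \sum_(cu <- l) cu.1 *: @delta BCS cu.2,
      (forall cu, cu \in l -> (bcs_len cu.2 <= size y)%N) &
      (forall z : sinf, size z = size y ->
         mcoeff (sinf_to_bcs z) (phi (@delta Sinf y)) = if z == y then c else 0)].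
Proof.
case: Hphi => Hadd Hsc Hmul Hone Hst.
elim/last_ind: y => [|y g [l [c [cnz Hl Hb Hc]]]].
- exists [:: (1, bcs_one)], 1; split.
  + exact: oner_neq0.
  + by rewrite big_seq1 scale1r; exact: Hone.
  + by move=> cu; rewrite mem_seq1 => /eqP ->.
  + case=> // _; have -> : sinf_to_bcs [::] = bcs_one by apply: val_inj; rewrite val_sinf.
    by rewrite [phi _]Hone /aone /delta mcoeffUU.
have [B [x [cg [HB cgnz Hg]]]] := phi_letter g.
set T := sinf_to_bcs [:: g].
have Hphi_y : phi (@delta Sinf (rcons y g)) =
   \sum_(cu <- l) cu.1 *: (@delta BCS (bcs_mul cu.2 B) + cg *: @delta BCS (bcs_mul cu.2 T)).
  rewrite -cats1.
  have -> : @delta Sinf (y ++ [:: g]) = amul (@delta Sinf y) (@delta Sinf [:: g]).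
    by rewrite amul_delta.
  rewrite Hmul Hl Hg amul_suml; apply: eq_bigr => cu _.
  by rewrite amulZl amulDr amulZr !amul_delta.
exists ([seq (cu.1, bcs_mul cu.2 B) | cu <- l] ++ [seq (cu.1 * cg, bcs_mul cu.2 T) | cu <- l]).
exists (c * cg); split.
- by rewrite mulf_neq0.
- rewrite Hphi_y sum_cat2 !big_map; rewrite -sum_split2; apply: eq_bigr => cu _; cbn [fst snd].
  by rewrite -scalerA -scalerDr.
- move=> cu; rewrite size_rcons mem_cat => /orP [] /mapP [cu' /Hb H ->]; cbn [fst snd].
  + by apply: leq_trans (@len_mul_inl cu'.2 B x HB) _; rewrite ltnS.
  + by rewrite /T len_mul_inr ltnS.
- move=> z; rewrite size_rcons; case/lastP: z => [|z' g'] //.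
  rewrite size_rcons => -[Hz].
  have -> : mcoeff (sinf_to_bcs (rcons z' g')) (phi (@delta Sinf (rcons y g))) =
    \sum_(cu <- l) cu.1 * cg * ((cu.2 == sinf_to_bcs z') && (g == g'))%:R.
    rewrite Hphi_y.
    rewrite (_ : \sum_(cu <- l) cu.1 *: (@delta BCS (bcs_mul cu.2 B) + cg *: @delta BCS (bcs_mul cu.2 T))
       = \sum_(cu <- [seq (cu.1, bcs_mul cu.2 B) | cu <- l] ++ [seq (cu.1 * cg, bcs_mul cu.2 T) | cu <- l]) cu.1 *: @delta BCS cu.2); last first.
      rewrite sum_cat2 !big_map; rewrite -sum_split2; apply: eq_bigr => cu _; cbn [fst snd].
  by rewrite -scalerA -scalerDr.
    rewrite (@coef_sum BCS) sum_cat2 !big_map /=.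
    rewrite (eq_big_seq (fun _ => 0)); last first.
      move=> cu Hcu; case: eqP => [E|]; last by rewrite mulr0.
      have := @mul_inl _ _ _ _ HB E; rewrite size_rcons Hz.
      by move=> /leq_trans /(_ (Hb cu Hcu)); rewrite ltnn.
    rewrite big1_eq add0r; apply: eq_bigr => cu _.
    by rewrite /T eq_mul_inr.
  case: (eqVneq g g') => [<-|ng].
  - transitivity ((\sum_(cu <- l) cu.1 * (cu.2 == sinf_to_bcs z')%:R) * cg).
      rewrite big_distrl; apply: eq_bigr => cu _; by rewrite andbT mulrAC.
    rewrite -(@coef_sum BCS) -Hl Hc // eqseq_rcons eqxx andbT.
    by case: eqP => _; rewrite ?mul0r.
  - rewrite big1 => [|cu _]; last by rewrite andbF mulr0.
    by rewrite eqseq_rcons (eq_sym g') (negbTE ng) andbF.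
Qed.
End Main.

Theorem lemma3p2
  (N : salg BCS -> Rdefinitions.R) (HN : is_Cstar_norm N)
  (phi : salg Sinf -> salg BCS) (Hphi : is_unital_star_hom phi)
  (Hphi_t : forall k : nat, phi (@delta Sinf (tgen k)) = a_gen N k)
  (w : sinf) (m : nat) (Hw : sinf_len w = m) :
  in_span (fun u : BCS => (bcs_len u <= m)%N) (phi (@delta Sinf w)) /\
  (forall y : sinf, (sinf_len y <= m)%N ->
     (@dual_delta BCS (sinf_to_bcs w) (phi (@delta Sinf y)) != 0 <-> y = w)).
Proof.
rewrite /sinf_len in Hw *.
split.
- have [l [c [_ Hl Hb _]]] := @inv N HN phi Hphi Hphi_t w.
  by exists l; split => // cu /Hb; rewrite Hw.
- move=> y Hy; have [l [c [cnz Hl Hb Hc]]] := @inv N HN phi Hphi Hphi_t y.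
  rewrite /dual_delta.
  case: (ltngtP (size y) m) => H.
  + rewrite Hl (@coef_sum BCS) big_seq big1 => [|cu /Hb Hcu].
      split; first by rewrite eqxx.
      by move=> E; rewrite E Hw ltnn in H.
    case: eqP => [E|]; last by rewrite mulr0.
    rewrite E len_sinf Hw in Hcu.
    by have := leq_ltn_trans Hcu H; rewrite ltnn.
  + by rewrite ltnNge Hy in H.
  + rewrite Hc; last by rewrite H.
    case: (eqVneq w y) => [->|ne]; split => //.
    * by rewrite eqxx.
    * by move=> E; rewrite E eqxx in ne.
Qed.
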